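(* Let $\Bbbk$ be a field, $n\ge2$, $q\in\Bbbk$ a primitive $n$-th root of unity, $T_n(q)$ the Taft algebra and $A$ a unital associative $\Bbbk$-algebra. Let $\cdot:T_n(q)\otimes A\to A$ be a partial action of $T_n(q)$ on $A$ with $g\cdot1_A=0$. Then for all $a\in A$ and $0\le i,j\le n-1$, $$g^ix^j\cdot a=q^{-ij}\sum_{k=0}^{j}(-1)^kq^{-\frac{k(k-1)}{2}}\binom{j}{k}_{q^{-1}}(x\cdot1_A)^{j-k}(g^{i+k}\cdot a)(x\cdot1_A)^k.$$
   Context: The Taft algebra $T_n(q)$ is the Hopf algebra generated by $g,x$ with relations $g^n=1$, $x^n=0$, $xg=qgx$, basis $\{g^ix^j:0\le i,j<n\}$, $g$ group-like, $\Delta(x)=x\otimes1+g\otimes x$, $\varepsilon(x)=0$; exponents of $g$ are read modulo $n$. A partial action of a bialgebra $H$ on $A$ is a linear map $\cdot:H\otimes A\to A$ with $1_H\cdot a=a$, $h\cdot(ab)=(h_1\cdot a)(h_2\cdot b)$, $h\cdot(k\cdot a)=(h_1\cdot1_A)(h_2k\cdot a)$. $q$-binomials: $\binom{0}{0}_p=1$, $\binom{N}{m}_p=0$ if $m>N$ or $m<0$, and $\binom{N}{m}_p=\binom{N-1}{m-1}_p+p^m\binom{N-1}{m}_p$ for $N\ge1$, $0\le m\le N$. *)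

(* Defs.v *)
From HB Require Import structures.
From mathcomp Require Import all_boot all_order all_algebra.
Set Implicit Arguments. Unset Strict Implicit. Unset Printing Implicit Defensive.
Import GRing.Theory.
Local Open Scope ring_scope.

Fixpoint qbinom (K : nzRingType) (p : K) (N m : nat) {struct N} : K :=
  match N with
  | 0%N => if m == 0%N then 1 else 0
  | N'.+1 =>
      if (m <= N)%N then
        (if m is m'.+1 then qbinom p N' m' else 0) + p ^+ m * qbinom p N' m
      else 0
  end.

(* A linear map  T_n(q) (x) A -> A  is encoded by its values on the basis
   {g^i x^j : 0 <= i,j < n}:  act i j a  =  (g^i x^j) . a.
   Exponents of g are reduced modulo n in all formulas below.

   Taft algebra structure used (derived from the defining relations):
   - product:  (g^i x^l)(g^i' x^j') = q^(l i') g^(i+i') x^(l+j')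
               (and 0 when l + j' >= n, since x^n = 0);
   - coproduct: Delta(g^i x^j) = sum_(k=0..j) binom(j,k)_q g^(i+k) x^(j-k) (x) g^i x^k
               (from Delta(g)=g(x)g, Delta(x)=x(x)1+g(x)x, (x(x)1)(g(x)x) = q (g(x)x)(x(x)1)). *)
Definition is_taft_partial_action (K : fieldType) (n : nat) (q : K)
  (A : algType K) (act : nat -> nat -> A -> A) : Prop :=
  [/\ (forall i j (c : K) (a b : A), (i < n)%N -> (j < n)%N ->
         act i j (c *: a + b) = c *: act i j a + act i j b),
      (forall a : A, act 0%N 0%N a = a),
      (* h . (ab) = (h_1 . a)(h_2 . b) *)
      (forall i j (a b : A), (i < n)%N -> (j < n)%N ->
         act i j (a * b) =
         \sum_(k < j.+1) qbinom q j k *: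
            (act ((i + k) %% n)%N (j - k)%N a * act i k b)) &
      (* h . (k . a) = (h_1 . 1_A)(h_2 k . a) *)
      (forall i j i' j' (a : A), (i < n)%N -> (j < n)%N -> (i' < n)%N -> (j' < n)%N ->
         act i j (act i' j' a) =
         \sum_(l < j.+1) qbinom q j l *:
            (act ((i + l) %% n)%N (j - l)%N 1 *
             (if (l + j' < n)%N
              then q ^+ (l * i')%N *: act ((i + i') %% n)%N (l + j')%N a
              else 0)))].

(* Main.v *)
Require Import Defs.
From HB Require Import structures.
From mathcomp Require Import all_boot all_order all_algebra.
From mathcomp Require Import zify ring.
Import GRing.Theory.
Local Open Scope ring_scope.

Lemma qb0 (K : nzRingType) (p : K) j : qbinom p j 0 = 1.
Proof. by elim: j => [|j IH] //=; rewrite add0r expr0 mul1r IH. Qed.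

Lemma qb_gt (K : nzRingType) (p : K) j k : (j < k)%N -> qbinom p j k = 0.
Proof.
case: j => [|j] /=; first by case: k.
by rewrite ltnNge => /negbTE ->.
Qed.

Lemma qbS (K : nzRingType) (p : K) j k :
  qbinom p j.+1 k.+1 = qbinom p j k + p ^+ k.+1 * qbinom p j k.+1.
Proof.
rewrite /=; case: ifP => // H.
by rewrite (qb_gt _ p j k) ?(qb_gt _ p j k.+1) ?mulr0 ?addr0 //; lia.
Qed.

Lemma qbsym (K : comNzRingType) (p : K) j k :
  qbinom p j.+1 k.+1 = qbinom p j k.+1 + p ^+ (j - k) * qbinom p j k.
Proof.
elim: j k => [|j IH] k.
  rewrite qbS; case: k => [|k] /=; first by rewrite !expr0 !mulr1 mulr0 add0r addr0.
  by rewrite !mulr0 !addr0.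
case: k => [|k].
  rewrite qbS qb0 subn0.
  rewrite {1}(IH 0%N) subn0 qb0 qbS qb0 expr1 mulr1 exprS mulrDr addrA mulr1 //.
rewrite [LHS]qbS subSS [in RHS](qbS _ p j k.+1) [in RHS](qbS _ p j k) (IH k) (IH k.+1).
have E : p ^+ k.+2 * (p ^+ (j - k.+1) * qbinom p j k.+1)
          = p ^+ (j - k) * (p ^+ k.+1 * qbinom p j k.+1).
  case: (ltnP k j) => H.
    by rewrite !mulrA -!exprD; congr (_ ^+ _ * _); lia.
  by rewrite qb_gt ?mulr0 //; lia.
rewrite !mulrDr E -!addrA; congr (_ + _); exact: addrCA.
Qed.

Definition cc (K : fieldType) (q : K) (j k : nat) : K :=
  (-1) ^+ k * q ^- ((k * k.-1)./2)%N * qbinom q^-1 j k.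
Arguments cc {K}.

Lemma half_lemma k : ((k.+1 * k.+1.-1)./2 = (k * k.-1)./2 + k)%N.
Proof.
have -> : (k.+1 * k.+1.-1 = k * k.-1 + k.*2)%N.
  by case: k => // m; rewrite /= -!muln2; nia.
by rewrite halfD odd_double andbF doubleK.
Qed.

Lemma cc_rec (K : fieldType) (q : K) j k :
  q != 0 -> cc q j.+1 k.+1 = cc q j k.+1 - q ^- j * cc q j k.
Proof.
move=> hq; rewrite /cc qbsym half_lemma mulrDr; congr (_ + _).
case: (leqP k j) => H; last by rewrite !(qb_gt _ _ j k) ?mulr0 ?oppr0.
have E : q ^- ((k * k.-1)./2 + k)%N * q^-1 ^+ (j - k) = q ^- j * q ^- (k * k.-1)./2.
  by rewrite exprVn -!invfM -!exprD; congr (_ ^-1); congr (_ ^+ _); lia.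
rewrite exprS.
move: E; set X := q ^- _; set Y := _ ^+ (j - k); move=> E.
rewrite mulrA -(mulrA _ X Y) E; ring.
Qed.

Lemma cc0 (K : fieldType) (q : K) j : cc q j 0 = 1.
Proof. by rewrite /cc qb0 /= expr0 invr1 !mul1r. Qed.

Lemma cc_gt (K : fieldType) (q : K) j k : (j < k)%N -> cc q j k = 0.
Proof. by move=> h; rewrite /cc qb_gt // mulr0. Qed.

Definition FF (K : fieldType) (A : algType K) (q : K) (y : A) (G : nat -> A) (i j : nat) : A :=
  q ^- (i * j)%N *: \sum_(k < j.+1) cc q j k *: (y ^+ (j - k)%N * G (i + k)%N * y ^+ k).
Arguments FF {K A}.

Lemma FF_step (K : fieldType) (A : algType K) (q : K) (y : A) (G : nat -> A) i j :
  q != 0 -> q ^- i *: (y * FF q y G i j - FF q y G i.+1 j * y) = FF q y G i j.+1.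
Proof.
move=> hq; rewrite /FF.
set X := fun k => y ^+ (j.+1 - k)%N * G (i + k)%N * y ^+ k.
have -> : y * (q ^- (i * j)%N *: \sum_(k < j.+1) cc q j k *: (y ^+ (j - k)%N * G (i + k)%N * y ^+ k))
   = q ^- (i * j)%N *: \sum_(k < j.+1) cc q j k *: X k.
  rewrite -scalerAr mulr_sumr; congr (_ *: _); apply: eq_bigr => k _.
  by rewrite -scalerAr !mulrA -exprS /X subSn // -ltnS.
have -> : (q ^- (i.+1 * j)%N *: \sum_(k < j.+1) cc q j k *: (y ^+ (j - k)%N * G (i.+1 + k)%N * y ^+ k)) * y
   = q ^- (i.+1 * j)%N *: \sum_(k < j.+1) cc q j k *: X k.+1.
  rewrite -scalerAl mulr_suml; congr (_ *: _); apply: eq_bigr => k _.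
  by rewrite -scalerAl -!mulrA -exprSr /X subSS addSnnS !mulrA.
have -> : \sum_(k < j.+2) cc q j.+1 k *: (y ^+ (j.+1 - k) * G (i + k)%N * y ^+ k)
   = \sum_(k < j.+2) cc q j.+1 k *: X k by [].
rewrite big_ord_recl [in RHS]big_ord_recl /=.
under [in RHS]eq_bigr => k _ do rewrite /bump /= add1n cc_rec // scalerBl.
rewrite sumrB.
rewrite (big_ord_recr j (fun k : 'I_j.+1 => cc q j k.+1 *: X k.+1)) /=.
rewrite (@cc_gt _ q j j.+1) // scale0r addr0 !cc0 !scale1r.
under eq_bigr => k _ do rewrite /bump /= add1n.
under [X in _ = _ *: (_ + (_ - X))]eq_bigr => k _ do rewrite -scalerA.
rewrite -scaler_sumr.
set S1 := \sum_(k < j) _.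
set S2 := \sum_(k < j.+1) _.
rewrite scalerBr !scalerA addrA.
have E1 : q ^- i * q ^- (i * j)%N = q ^- (i * j.+1)%N.
  by rewrite -invfM -exprD mulnS.
have E2 : q ^- i * q ^- (i.+1 * j)%N = q ^- (i * j.+1)%N * q ^- j.
  by rewrite -!invfM -!exprD mulnS mulSn; congr (_ ^-1); congr (_ ^+ _); lia.
by rewrite E1 E2 scalerBr scalerDr scalerA.
Qed.

Theorem proposition3p3 (K : fieldType) (n : nat) (q : K) (A : algType K)
  (act : nat -> nat -> A -> A) :
  (2 <= n)%N ->
  n.-primitive_root q ->
  is_taft_partial_action n q act ->
  act 1%N 0%N 1 = 0 ->
  forall (a : A) (i j : nat), (i < n)%N -> (j < n)%N ->
    act i j a =
    q ^- (i * j)%N *: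
      \sum_(k < j.+1)
        ((-1) ^+ k * q ^- ((k * k.-1)./2)%N * qbinom q^-1 j k) *:
          (act 0%N 1%N 1 ^+ (j - k)%N * act ((i + k) %% n)%N 0%N a * act 0%N 1%N 1 ^+ k).
Proof.
move=> hn hprim [lin h1 hmul hcomp] e1 a.
have n0 : (0 < n)%N by lia.
have hq : q != 0.
  apply/eqP => q0; have := prim_expr_order hprim.
  rewrite q0 expr0n; have -> : (n == 0%N) = false by lia.
  by move=> /eqP; rewrite eq_sym oner_eq0.
have act0 : forall i j, (i < n)%N -> (j < n)%N -> act i j 0 = 0.
  move=> i j hi hj; have := lin i j 1 0 0 hi hj; rewrite !scale1r !addr0 => H.
  by have := congr1 (fun x => x - act i j 0) H; rewrite addrK subrr.
have qb10 : qbinom q 1 0 = 1 by rewrite qb0.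
have qb11 : qbinom q 1 1 = 1 by rewrite qbS qb0 (qb_gt _ _ 0 1) // mulr0 addr0.
have nm1 : (n.-1 < n)%N by lia.
have nm1m : (n.-1 %% n = n.-1)%N by rewrite modn_small.
have nm1p : ((n.-1 + 1) %% n = 0)%N by rewrite addn1 prednK // modnn.
set y := act 0%N 1%N 1.
set z := act n.-1 1%N 1.
have en1 : act n.-1 0%N 1 = 0.
  have := hcomp n.-1 0%N 1%N 0%N 1 nm1 n0 hn n0.
  rewrite e1 act0 // big_ord1 /= addn0 nm1m nm1p n0 h1 subn0 mul0n expr0 !scale1r mulr1.
  by move=> <-.
have hz : forall b, act n.-1 1%N b = b * z.
  move=> b; have := hmul n.-1 1%N b 1 nm1 hn.
  rewrite mulr1 !big_ord_recl big_ord0 /= /bump /= expr0 mulr1 add0r mulr0 !addr0 !scale1r addn0 subn0 !addn0 subnn nm1m nm1p en1 mulr0 add0r h1.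
  done.
have zE : z = - (q *: y).
  have := hcomp n.-1 1%N 1%N 0%N 1 nm1 hn hn n0.
  rewrite e1 act0 // !big_ord_recl big_ord0 /= /bump /= expr0 mulr1 add0r mulr0 !addr0 !scale1r !addn0 subn0 subnn nm1m nm1p.
  rewrite n0 hn h1 mulr1 mul1r mul1n expr1 -/z -/y => /eqP; rewrite eq_sym addr_eq0 => /eqP ->.
  done.
have modi : forall i, (i < n)%N -> ((n.-1 + (i + 1) %% n) %% n = i)%N.
  move=> i hi; rewrite modnDmr.
  have -> : (n.-1 + (i + 1) = i + n)%N by lia.
  by rewrite modnDr modn_small.
have rec : forall i j, (i < n)%N -> (j.+1 < n)%N ->
    act i j.+1 a = q ^- i *: (y * act i j a - act ((i + 1) %% n)%N j a * y).
  move=> i j hi hj.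
  have hi' : ((i + 1) %% n < n)%N by rewrite ltn_mod.
  have := hcomp n.-1 1%N ((i + 1) %% n)%N j a nm1 hn hi' (ltnW hj).
  rewrite hz !big_ord_recl big_ord0 /= /bump /= expr0 mulr1 add0r mulr0 !addr0 !scale1r !addn0 subn0 subnn nm1m nm1p.
  rewrite modi // (ltnW hj) add0n hj h1 mul1r mul1n add1n -/z (prim_expr_mod hprim) => H.
  have H2 : q ^+ (i + 1) *: act i j.+1 a = q *: (y * act i j a - act ((i + 1) %% n)%N j a * y).
    have -> : q ^+ (i + 1) *: act i j.+1 a = act ((i + 1) %% n)%N j a * z - z * act i j a.
      by rewrite H addrAC subrr add0r.
    by rewrite zE mulrN mulNr -scalerAr -scalerAl opprK scalerBr addrC.
  have -> : act i j.+1 a = q ^- (i + 1) *: (q ^+ (i + 1) *: act i j.+1 a).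
    by rewrite scalerA mulVf ?scale1r // expf_neq0.
  rewrite H2 scalerA; congr (_ *: _).
  by rewrite exprD expr1 invfM -mulrA mulVf // mulr1.
have main : forall j, (j < n)%N -> forall i, (i < n)%N ->
    act i j a = FF q y (fun m => act (m %% n)%N 0%N a) i j.
  elim=> [|j IH] hj i hi.
    by rewrite /FF big_ord1 /= cc0 scale1r !expr0 mul1r mulr1 muln0 expr0 invr1 scale1r addn0 modn_small.
  have hj' : (j < n)%N by lia.
  rewrite rec // !IH // ?ltn_mod //.
  rewrite -FF_step //; congr (_ *: (_ - _ * _)).
  rewrite /FF; congr (_ *: _).
    by rewrite !exprM (prim_expr_mod hprim) addn1.
  apply: eq_bigr => k _; by rewrite modnDml addn1.
move=> i j hi hj; exact: (main j hj i hi).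
Qed.
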